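(* Let $f:G\to H$ be a surjective group homomorphism. If there exists a surjective homomorphism $\varphi:H\to K$ onto a finite noncyclic group $K$ such that $f$ admits a local section on $\varphi^{-1}(\langle b\rangle)$ for every $b\in K$ with $b\neq 1$, then $\mathrm{sec}(f)<\infty$. Conversely, if $H$ is abelian and $\mathrm{sec}(f)<\infty$, then such a $K$ and $\varphi$ exist.
   Context: For a homomorphism $f:G\to H$ and a subgroup $L\le H$, a local section of $f$ on $L$ is a homomorphism $s:L\to G$ with $f\circ s=\mathrm{incl}_L$ (the inclusion $L\hookrightarrow H$). The sectional number $\mathrm{sec}(f)$ is the least positive integer $m$ such that there exist proper subgroups $H_1,\ldots,H_m$ of $H$ with $H=H_1\cup\cdots\cup H_m$ and such that $f$ admits a local section on each $H_i$; $\mathrm{sec}(f)=\infty$ if no such $m$ exists. *)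

(* Defs.v *)
From Stdlib Require Import List.

Record group := Group {
  carrier :> Type;
  gmul : carrier -> carrier -> carrier;
  gone : carrier;
  ginv : carrier -> carrier;
  gmulA : forall x y z, gmul x (gmul y z) = gmul (gmul x y) z;
  gmul1 : forall x, gmul gone x = x;
  gmulV : forall x, gmul (ginv x) x = gone
}.

Arguments gmul {g}.
Arguments gone {g}.
Arguments ginv {g}.

Definition is_hom {G H : group} (f : G -> H) : Prop :=
  forall x y : G, f (gmul x y) = gmul (f x) (f y).

Definition surjective {A B : Type} (f : A -> B) : Prop :=
  forall y, exists x, f x = y.

Definition is_subgroup {G : group} (S : G -> Prop) : Prop :=
  S gone /\ (forall x y, S x -> S y -> S (gmul x y)) /\
  (forall x, S x -> S (ginv x)).

Definition proper {G : group} (S : G -> Prop) : Prop := exists x, ~ S x.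

Definition cyc {G : group} (b : G) : G -> Prop :=
  fun x => forall S : G -> Prop, is_subgroup S -> S b -> S x.

Definition finite_group (K : group) : Prop :=
  exists l : list K, forall x, In x l.

Definition cyclic_group (K : group) : Prop :=
  exists g : K, forall x, cyc g x.

Definition abelian (G : group) : Prop :=
  forall x y : G, gmul x y = gmul y x.

(* local section of f on the subgroup L of H: a homomorphism s : L -> G
   with f o s = incl_L (s is represented by a function H -> G whose
   restriction to L is the section; values off L are irrelevant). *)
Definition local_section {G H : group} (f : G -> H) (L : H -> Prop) : Prop :=
  exists s : H -> G,
    (forall x y, L x -> L y -> s (gmul x y) = gmul (s x) (s y)) /\
    (forall x, L x -> f (s x) = x).

(* sec(f) < oo : H is a finite union of m >= 1 proper subgroups, on each of
   which f admits a local section *)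
Definition sec_finite {G H : group} (f : G -> H) : Prop :=
  exists l : list (H -> Prop),
    l <> nil /\
    (forall S, In S l -> is_subgroup S /\ proper S /\ local_section f S) /\
    (forall x : H, exists S, In S l /\ S x).

Definition good_quotient {G H : group} (f : G -> H) : Prop :=
  exists (K : group) (phi : H -> K),
    is_hom phi /\ surjective phi /\ finite_group K /\ ~ cyclic_group K /\
    (forall b : K, b <> gone -> local_section f (fun h => cyc b (phi h))).

(* Main.v *)
Require Import Defs.
From Stdlib Require Import List Classical ClassicalEpsilon FunctionalExtensionality PropExtensionality ProofIrrelevance.
Import ListNotations.

Local Notation "x ** y" := (gmul x y) (at level 40, left associativity).

Section GroupLemmas.
Variable G : group.

Lemma mul_inv_r (x : G) : x ** ginv x = gone.
Proof.
  rewrite <- (gmul1 _ (x ** ginv x)).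
  rewrite <- (gmulV _ (ginv x)) at 1.
  rewrite <- gmulA. rewrite (gmulA _ (ginv x) x (ginv x)).
  rewrite gmulV, gmul1. apply gmulV.
Qed.

Lemma mul_one_r (x : G) : x ** gone = x.
Proof. rewrite <- (gmulV _ x), gmulA, mul_inv_r, gmul1. reflexivity. Qed.

Lemma inv_uniq (a b : G) : a ** b = gone -> a = ginv b.
Proof.
  intro E. rewrite <- (mul_one_r a), <- (mul_inv_r b), gmulA, E, gmul1. reflexivity.
Qed.

Lemma inv_inv (x : G) : ginv (ginv x) = x.
Proof. symmetry. apply inv_uniq. apply mul_inv_r. Qed.

Lemma inv_mul (x y : G) : ginv (x ** y) = ginv y ** ginv x.
Proof.
  symmetry. apply inv_uniq.
  rewrite <- gmulA, (gmulA _ (ginv x)), gmulV, gmul1, gmulV. reflexivity.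
Qed.

Lemma inv_one : ginv (@gone G) = gone.
Proof. symmetry. apply inv_uniq. apply gmul1. Qed.

Lemma mulKr (t a : G) : t ** a ** ginv a = t.
Proof. rewrite <- gmulA, mul_inv_r, mul_one_r. reflexivity. Qed.

Lemma mulVKr (t a : G) : t ** ginv a ** a = t.
Proof. rewrite <- gmulA, gmulV, mul_one_r. reflexivity. Qed.

End GroupLemmas.

Ltac gs := repeat progress (rewrite ?inv_mul, ?inv_inv, ?inv_one, ?gmulA, ?mul_inv_r,
   ?gmulV, ?gmul1, ?mul_one_r, ?mulKr, ?mulVKr); try reflexivity.

Lemma hom_one {G H : group} (f : G -> H) : is_hom f -> f gone = gone.
Proof.
  intro Hf. assert (E : f gone ** f gone = f gone) by (rewrite <- Hf, gmul1; reflexivity).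
  rewrite <- (gmulV _ (f gone)). rewrite <- E at 3. rewrite gmulA, gmulV, gmul1. reflexivity.
Qed.

Lemma hom_inv {G H : group} (f : G -> H) : is_hom f -> forall x, f (ginv x) = ginv (f x).
Proof.
  intros Hf x. apply inv_uniq. rewrite <- Hf, gmulV. apply hom_one; auto.
Qed.

Lemma sub_mul {G : group} (S : G -> Prop) : is_subgroup S -> forall x y, S x -> S y -> S (x ** y).
Proof. intros [_ [H _]]; auto. Qed.
Lemma sub_inv {G : group} (S : G -> Prop) : is_subgroup S -> forall x, S x -> S (ginv x).
Proof. intros [_ [_ H]]; auto. Qed.
Lemma sub_one {G : group} (S : G -> Prop) : is_subgroup S -> S gone.
Proof. intros [H _]; auto. Qed.

Lemma coset_trans {G : group} (S : G -> Prop) : is_subgroup S -> forall a b c,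
  S (ginv a ** b) -> S (ginv a ** c) -> S (ginv b ** c).
Proof.
  intros HS a b c H1 H2.
  assert (E : ginv b ** c = ginv (ginv a ** b) ** (ginv a ** c)) by gs.
  rewrite E. apply sub_mul; auto. apply sub_inv; auto.
Qed.

Lemma coset_trans2 {G : group} (S : G -> Prop) : is_subgroup S -> forall a b c,
  S (ginv a ** b) -> S (ginv b ** c) -> S (ginv a ** c).
Proof.
  intros HS a b c H1 H2.
  assert (E : ginv a ** c = (ginv a ** b) ** (ginv b ** c)) by gs.
  rewrite E. apply sub_mul; auto.
Qed.

Lemma cyc_sub {G : group} (b : G) : is_subgroup (cyc b).
Proof.
  split; [|split].
  - intros S HS _. apply sub_one; auto.
  - intros x y Hx Hy S HS Hb. apply sub_mul; [auto | apply Hx | apply Hy]; auto.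
  - intros x Hx S HS Hb. apply sub_inv; [auto | apply Hx]; auto.
Qed.

Section Neumann.
Variable H : group.

Definition fin_index (S : H -> Prop) :=
  exists reps : list H, forall x, exists r, In r reps /\ S (ginv r ** x).

Definition covers (E : list (H * (H -> Prop))) :=
  forall x, exists e, In e E /\ snd e (ginv (fst e) ** x).

Lemma WN (P : (H -> Prop) -> Prop) (Ls : list (H -> Prop)) :
  forall E : list (H * (H -> Prop)),
  (forall e, In e E -> is_subgroup (snd e) /\ P (snd e) /\ (fin_index (snd e) \/ In (snd e) Ls)) ->
  covers E -> exists S, P S /\ fin_index S.
Proof.
  induction Ls as [|L Ls IH]; intros E HE Hc.
  - destruct (Hc gone) as [e [He _]]. destruct (HE e He) as [_ [HP [Hf|[]]]]. eauto.
  - destruct (classic (fin_index L)) as [HL|HL].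
    + apply (IH E); auto. intros e He; destruct (HE e He) as [Hs [HP Hf]]; split; [auto|split; [auto|]].
      destruct Hf as [Hf|[Heq|Hin]]; auto. left; rewrite <- Heq; auto.
    + pose (isL := fun e : H * (H -> Prop) =>
                  if excluded_middle_informative (snd e = L) then true else false).
      assert (Hx : exists x, forall e, In e E -> snd e = L -> ~ L (ginv (fst e) ** x)).
      { apply NNPP; intro Hn. apply HL. exists (map fst (filter isL E)). intro y.
        apply NNPP; intro Hy. apply Hn. exists y. intros e He HeL HLy. apply Hy.
        exists (fst e). split; auto. apply in_map. apply filter_In. split; auto.
        unfold isL. destruct (excluded_middle_informative (snd e = L)); congruence. }
      destruct Hx as [x Hx].
      pose (E0 := filter (fun e => negb (isL e)) E).
      assert (HE0 : forall e, In e E0 -> is_subgroup (snd e) /\ P (snd e) /\ (fin_index (snd e) \/ In (snd e) Ls)).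
      { intros e He. unfold E0 in He; apply filter_In in He; destruct He as [He Hn].
        destruct (HE e He) as [Hs [HP Hf]]. split; [auto|split; [auto|]].
        destruct Hf as [Hf|[Heq|Hin]]; auto. exfalso; unfold isL in Hn;
        destruct (excluded_middle_informative (snd e = L)); simpl in Hn; congruence. }
      assert (HinE0 : forall e, In e E -> snd e <> L -> In e E0).
      { intros e He Hn. unfold E0; apply filter_In; split; auto. unfold isL.
        destruct (excluded_middle_informative (snd e = L)); simpl; congruence. }
      apply (IH (E0 ++ flat_map (fun ei => map (fun ej => (fst ei ** ginv x ** fst ej, snd ej)) E0) E)).
      * intros e He. apply in_app_or in He. destruct He as [He|He]; auto.
        apply in_flat_map in He. destruct He as [ei [Hei He]]. apply in_map_iff in He.
        destruct He as [ej [<- Hej]]. simpl. auto.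
      * intro y. destruct (Hc y) as [e [He Hy]].
        destruct (excluded_middle_informative (snd e = L)) as [HeL|HeL].
        -- pose (z := x ** (ginv (fst e) ** y)).
           destruct (Hc z) as [ej [Hej Hz]].
           destruct (excluded_middle_informative (snd ej = L)) as [HjL|HjL].
           ++ exfalso. apply (Hx ej Hej HjL).
              assert (HLs : is_subgroup L) by (rewrite <- HeL; apply (HE e He)).
              rewrite HjL in Hz. rewrite HeL in Hy.
              assert (E1 : ginv (fst ej) ** x = (ginv (fst ej) ** z) ** ginv (ginv (fst e) ** y))
                by (unfold z; gs).
              rewrite E1. apply sub_mul; auto. apply sub_inv; auto.
           ++ exists (fst e ** ginv x ** fst ej, snd ej). split.
              ** apply in_app_iff; right. apply in_flat_map. exists e; split; auto.
                 apply in_map_iff. exists ej; split; auto.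
              ** simpl. assert (E1 : ginv (fst e ** ginv x ** fst ej) ** y = ginv (fst ej) ** z)
                   by (unfold z; gs). rewrite E1; auto.
        -- exists e. split; auto. apply in_app_iff; left; auto.
Qed.

Lemma fin_inter (A B : H -> Prop) : is_subgroup A -> is_subgroup B ->
  fin_index A -> fin_index B -> fin_index (fun y => A y /\ B y).
Proof.
  intros HA HB [ra Hra] [rb Hrb].
  pose (pick := fun r s => epsilon (inhabits gone) (fun t => A (ginv r ** t) /\ B (ginv s ** t))).
  exists (flat_map (fun r => map (fun s => pick r s) rb) ra).
  intro x. destruct (Hra x) as [r [Hr Hx1]]. destruct (Hrb x) as [s [Hs Hx2]].
  assert (Hp : A (ginv r ** pick r s) /\ B (ginv s ** pick r s)).
  { unfold pick; apply epsilon_spec. exists x; auto. }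
  exists (pick r s). split.
  - apply in_flat_map; exists r; split; auto; apply in_map; auto.
  - destruct Hp; split; eapply coset_trans; eauto.
Qed.

Definition Dl (l : list (H -> Prop)) : H -> Prop :=
  fun y => forall S, In S l -> is_subgroup S -> fin_index S -> S y.

Lemma Dl_sub l : is_subgroup (Dl l).
Proof.
  split; [|split].
  - intros S _ HS _. apply sub_one; auto.
  - intros x y Hx Hy S Hi HS Hf. apply sub_mul; [auto|apply Hx|apply Hy]; auto.
  - intros x Hx S Hi HS Hf. apply sub_inv; [auto|apply Hx]; auto.
Qed.

Lemma Dl_fin l : fin_index (Dl l).
Proof.
  induction l as [|S l IHl].
  - exists [gone]. intro x. exists gone. split; [left; auto|]. intros S [].
  - destruct (classic (is_subgroup S /\ fin_index S)) as [[HS HF]|HN].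
    + destruct (fin_inter S (Dl l) HS (Dl_sub l) HF IHl) as [reps Hr]. exists reps.
      intro x; destruct (Hr x) as [r [Hr1 [Ha Hb]]]. exists r; split; auto.
      intros S' [<-|HS'] H1 H2; auto. apply Hb; auto.
    + destruct IHl as [reps Hr]; exists reps; intros x; destruct (Hr x) as [r [Hr1 Hb]].
      exists r; split; auto. intros S' [<-|HS'] Hs Hf. exfalso; auto. apply Hb; auto.
Qed.

Lemma SN (l : list (H -> Prop)) : (forall S, In S l -> is_subgroup S) ->
  (forall x, exists S, In S l /\ S x) -> forall x, exists S, In S l /\ fin_index S /\ S x.
Proof.
  intros Hsub Hcov x0. apply NNPP; intro Hn.
  destruct (Dl_fin l) as [reps Hreps].
  pose (l' := filter (fun S => if excluded_middle_informative (fin_index S) then false else true) l).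
  assert (Hl' : forall S, In S l' <-> In S l /\ ~ fin_index S).
  { intro S. unfold l'. rewrite filter_In.
    destruct (excluded_middle_informative (fin_index S)); intuition congruence. }
  pose (E := flat_map (fun r => map (fun S => (r ** ginv x0, S)) l') reps).
  destruct (WN (fun S => In S l /\ ~ fin_index S) l E) as [S [[_ HS] HS']]; [ | | contradiction].
  - intros e He. unfold E in He. apply in_flat_map in He; destruct He as [r [Hr He]].
    apply in_map_iff in He; destruct He as [S [<- HS]]; simpl. apply Hl' in HS.
    destruct HS; split; [auto|split; [auto|right; auto]].
  - intro y. destruct (Hreps y) as [r [Hr Hy]].
    pose (z := x0 ** (ginv r ** y)). destruct (Hcov z) as [S [HSl HSz]].
    assert (HnS : ~ fin_index S).
    { intro HF. apply Hn. exists S. split; auto. split; auto.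
      assert (E1 : x0 = z ** ginv (ginv r ** y)) by (unfold z; gs).
      rewrite E1. apply sub_mul; auto. apply sub_inv; auto. apply Hy; auto. }
    exists (r ** ginv x0, S). split.
    + apply in_flat_map. exists r; split; auto. apply in_map. apply Hl'; auto.
    + simpl. assert (E1 : ginv (r ** ginv x0) ** y = z) by (unfold z; gs). rewrite E1; auto.
Qed.

End Neumann.

Section Quot.
Variable H : group.
Hypothesis Hab : abelian H.
Variable N : H -> Prop.
Hypothesis HN : is_subgroup N.

Definition cos (h : H) : H -> Prop := fun y => N (ginv h ** y).
Definition Qc := {P : H -> Prop | exists h, P = cos h}.
Definition qphi (h : H) : Qc := exist _ (cos h) (ex_intro _ h eq_refl).
Definition qrep (p : Qc) : H := epsilon (inhabits gone) (fun h => proj1_sig p = cos h).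

Lemma qrep_spec p : qphi (qrep p) = p.
Proof.
  destruct p as [P HP]. unfold qphi. apply subset_eq_compat. symmetry.
  unfold qrep. exact (epsilon_spec (inhabits gone) (fun h => P = cos h) HP).
Qed.

Lemma qphi_eq x y : qphi x = qphi y <-> N (ginv x ** y).
Proof.
  split.
  - intro E. assert (E2 : cos x = cos y) by (apply (f_equal (@proj1_sig _ _)) in E; exact E).
    assert (Hy : cos y y) by (unfold cos; rewrite gmulV; apply sub_one; auto).
    rewrite <- E2 in Hy. exact Hy.
  - intro Hn. unfold qphi; apply subset_eq_compat.
    apply functional_extensionality; intro z; apply propositional_extensionality.
    unfold cos; split; intro.
    + eapply coset_trans; eauto.
    + eapply coset_trans2; eauto.
Qed.

Lemma qphi_surj p : exists x, qphi x = p.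
Proof. exists (qrep p). apply qrep_spec. Qed.

Definition qmul (p q : Qc) : Qc := qphi (qrep p ** qrep q).
Definition qone : Qc := qphi gone.
Definition qinv (p : Qc) : Qc := qphi (ginv (qrep p)).

Lemma qphi_mul x y : qmul (qphi x) (qphi y) = qphi (x ** y).
Proof.
  unfold qmul.
  pose proof (qrep_spec (qphi x)) as Ex. pose proof (qrep_spec (qphi y)) as Ey.
  set (x' := qrep (qphi x)) in *. set (y' := qrep (qphi y)) in *.
  apply qphi_eq in Ex. apply qphi_eq in Ey. apply qphi_eq.
  assert (E : ginv (x' ** y') ** (x ** y) = (ginv x' ** x) ** (ginv y' ** y)).
  { rewrite inv_mul, (Hab (ginv y') (ginv x')), <- !gmulA.
    rewrite (gmulA _ x (ginv y') y), (Hab x (ginv y')), <- !gmulA. reflexivity. }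
  rewrite E. apply sub_mul; auto.
Qed.

Lemma qphi_inv x : qinv (qphi x) = qphi (ginv x).
Proof.
  unfold qinv. pose proof (qrep_spec (qphi x)) as Ex.
  set (x' := qrep (qphi x)) in *. apply qphi_eq in Ex. apply qphi_eq.
  rewrite inv_inv, (Hab x').
  assert (E : ginv x ** x' = ginv (ginv x' ** x)) by gs.
  rewrite E. apply sub_inv; auto.
Qed.

Lemma qassoc : forall p q r, qmul p (qmul q r) = qmul (qmul p q) r.
Proof.
  intros p q r. destruct (qphi_surj p) as [a <-]. destruct (qphi_surj q) as [b <-].
  destruct (qphi_surj r) as [c <-]. rewrite !qphi_mul, gmulA. reflexivity.
Qed.

Lemma q1 : forall p, qmul qone p = p.
Proof. intro p. destruct (qphi_surj p) as [a <-]. unfold qone. rewrite qphi_mul, gmul1. reflexivity. Qed.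

Lemma qV : forall p, qmul (qinv p) p = qone.
Proof. intro p. destruct (qphi_surj p) as [a <-]. rewrite qphi_inv, qphi_mul, gmulV. reflexivity. Qed.

Definition Qg : group := Group Qc qmul qone qinv qassoc q1 qV.
Definition qphig : H -> Qg := qphi.

Lemma qphig_hom : is_hom qphig.
Proof. intros x y. symmetry. apply qphi_mul. Qed.

Lemma qphig_surj : surjective qphig.
Proof. intro p. apply qphi_surj. Qed.

Lemma key (S : H -> Prop) : is_subgroup S -> (forall y, N y -> S y) ->
  forall h, S h -> forall y, cyc (qphig h) (qphig y) -> S y.
Proof.
  intros HS HNS h Hh y Hc.
  pose (Qs := fun k : Qg => exists y, qphig y = k /\ S y).
  assert (HQs : is_subgroup Qs).
  { split; [|split].
    - exists gone. split; [reflexivity|apply sub_one; auto].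
    - intros k1 k2 [y1 [<- H1]] [y2 [<- H2]]. exists (y1 ** y2). split.
      + apply qphig_hom.
      + apply sub_mul; auto.
    - intros k [y1 [<- H1]]. exists (ginv y1). split.
      + symmetry. apply qphi_inv.
      + apply sub_inv; auto. }
  destruct (Hc Qs HQs (ex_intro _ h (conj eq_refl Hh))) as [y' [Heq Hy']].
  apply qphi_eq in Heq.
  assert (E : y = y' ** (ginv y' ** y)) by gs. rewrite E. apply sub_mul; auto.
Qed.

End Quot.

Theorem theorem2p14 (G H : group) (f : G -> H) :
  is_hom f -> surjective f ->
  (good_quotient f -> sec_finite f) /\
  (abelian H -> sec_finite f -> good_quotient f).
Proof.
  intros Hf Hfs. split.
  - intros [K [phi [Hhom [Hsurj [[lK HlK] [Hnc Hsec]]]]]].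
    assert (Hb0 : exists b0 : K, b0 <> gone).
    { apply NNPP; intro Hn. apply Hnc. exists gone. intros x S HS _.
      assert (x = gone) by (apply NNPP; intro; apply Hn; eauto). subst; apply sub_one; auto. }
    destruct Hb0 as [b0 Hb0].
    pose (ch := fun b : K => if excluded_middle_informative (b = gone) then b0 else b).
    assert (Hch : forall b, ch b <> gone).
    { unfold ch; intro b; destruct (excluded_middle_informative _); auto. }
    exists (map (fun b => fun h => cyc (ch b) (phi h)) lK). split; [|split].
    + destruct lK; [destruct (HlK gone) | discriminate].
    + intros S HS. apply in_map_iff in HS. destruct HS as [b [<- _]]. split; [|split].
      * split; [|split].
        -- rewrite (hom_one phi Hhom). apply sub_one, cyc_sub.
        -- intros x y Hx Hy. rewrite Hhom. apply sub_mul; auto. apply cyc_sub.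
        -- intros x Hx. rewrite (hom_inv phi Hhom). apply sub_inv; auto. apply cyc_sub.
      * apply NNPP; intro Hn. apply Hnc. exists (ch b). intro k.
        destruct (Hsurj k) as [h <-]. apply NNPP; intro Hk. apply Hn. exists h. exact Hk.
      * apply Hsec, Hch.
    + intros x. exists (fun h => cyc (ch (phi x)) (phi h)). split.
      * apply in_map_iff; exists (phi x); split; auto.
      * unfold ch; destruct (excluded_middle_informative (phi x = gone)) as [e|n].
        -- rewrite e. intros S HS _; apply sub_one; auto.
        -- intros S HS Hb; exact Hb.
  - intros Hab [l [Hne [Hl Hcov]]].
    assert (Hsub : forall S, In S l -> is_subgroup S) by (intros S HS; apply (Hl S HS)).
    pose proof (SN H l Hsub Hcov) as Hsn.
    pose proof (Dl_sub H l) as HD.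
    exists (Qg H Hab (Dl H l) HD), (qphig H Hab (Dl H l) HD).
    assert (Hk : forall S, In S l -> fin_index H S -> forall h, S h -> forall y,
              cyc (qphig H Hab (Dl H l) HD h) (qphig H Hab (Dl H l) HD y) -> S y).
    { intros S HSl HSf h Hh y Hc. apply (key H Hab (Dl H l) HD S (Hsub S HSl)) with h; auto.
      intros z Hz. apply Hz; auto. }
    split; [apply qphig_hom|]. split; [apply qphig_surj|]. split; [|split].
    + destruct (Dl_fin H l) as [reps Hr]. exists (map (qphig H Hab (Dl H l) HD) reps).
      intro k. destruct (qphig_surj H Hab (Dl H l) HD k) as [x <-].
      destruct (Hr x) as [r [Hr1 Hr2]]. apply in_map_iff. exists r; split; auto.
      apply qphi_eq; auto.
    + intros [g Hg]. destruct (qphig_surj H Hab (Dl H l) HD g) as [h <-].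
      destruct (Hsn h) as [S [HSl [HSf HSh]]]. destruct (Hl S HSl) as [_ [[x Hx] _]].
      apply Hx. apply (Hk S HSl HSf h HSh x (Hg _)).
    + intros b _. destruct (qphig_surj H Hab (Dl H l) HD b) as [h <-].
      destruct (Hsn h) as [S [HSl [HSf HSh]]]. destruct (Hl S HSl) as [_ [_ [s [Hs1 Hs2]]]].
      exists s. split.
      * intros x y Hx Hy. apply Hs1; eapply Hk; eauto.
      * intros x Hx. apply Hs2; eapply Hk; eauto.
Qed.
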